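(* Let $p\in(0,1)$ and let $\eta,c$ be positive numbers with $\eta\ge 4e^p/p$ and $c\le p\eta$. Then $$-c\,\Upsilon(1/c)+c\log f(2-\eta/c)<\max\{\eta(1-p)\log(1-p^3),\,-0.15p\eta\}-1.$$
   Context: $\Upsilon:(0,\infty)\to\mathbb{R}$ is defined by $\Upsilon(x)=x-1-\log x$ for $0<x\le1$ and $\Upsilon(x)=0$ for $x>1$. $f:(-\infty,1]\to\mathbb{R}$ is defined by $f(x)=(2-x)^{2-x}p(1-p)^{1-x}(1-x)^{x-1}$, with the convention $0^0=1$. $\log$ is natural. *)

(* Defs.v *)
From Stdlib Require Import Reals.
Open Scope R_scope.

(* Real power a^b for a >= 0, with the convention 0^0 = 1 (and 0^b = 0 for b <> 0).
   For a > 0 it is Rpower a b = exp (b * ln a). *)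
Definition rpow (a b : R) : R :=
  if Req_EM_T a 0 then (if Req_EM_T b 0 then 1 else 0) else Rpower a b.

Definition Upsilon (x : R) : R :=
  if Rle_dec x 1 then x - 1 - ln x else 0.

Definition f_fun (p x : R) : R :=
  rpow (2 - x) (2 - x) * p * rpow (1 - p) (1 - x) * rpow (1 - x) (x - 1).

(* Main.v *)
Require Import Defs.
From Stdlib Require Import Reals.
From Stdlib Require Import Lra Lia Psatz.
Open Scope R_scope.

Lemma rpow_pos (a b : R) : 0 < a -> rpow a b = Rpower a b.
Proof. intro H. unfold rpow. destruct (Req_EM_T a 0); [lra|reflexivity]. Qed.

Lemma ln_Rpower (a b : R) : ln (Rpower a b) = b * ln a.
Proof. unfold Rpower. apply ln_exp. Qed.

Lemma Rpower_pos' (a b : R) : 0 < Rpower a b.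
Proof. unfold Rpower. apply exp_pos. Qed.

Lemma lnle (y : R) : 0 < y -> ln y <= y - 1.
Proof.
  intro H. pose proof (exp_ineq1_le (ln y)) as H0. rewrite exp_ln in H0 by exact H. lra.
Qed.

Lemma ln_div' (x y : R) : 0 < x -> 0 < y -> ln (x / y) = ln x - ln y.
Proof.
  intros Hx Hy. unfold Rdiv. rewrite ln_mult; [|exact Hx|apply Rinv_0_lt_compat; exact Hy].
  rewrite ln_Rinv by exact Hy. ring.
Qed.

Lemma exp_npow (n : nat) (x : R) : exp x ^ n = exp (INR n * x).
Proof.
  induction n as [|n IH].
  - simpl. rewrite Rmult_0_l, exp_0. reflexivity.
  - rewrite S_INR. simpl. rewrite IH. rewrite <- exp_plus. f_equal. ring.
Qed.

Lemma ln2_lt : ln 2 < 7/10.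
Proof.
  assert (H1 : 1 + 7/1000 <= exp (7/1000)) by apply exp_ineq1_le.
  assert (H2 : (1 + 7/1000)^100 <= exp (7/1000) ^ 100).
  { apply pow_incr. lra. }
  assert (H3 : 2 < (1 + 7/1000)^100) by (simpl; lra).
  rewrite exp_npow in H2.
  replace (INR 100 * (7/1000)) with (7/10) in H2 by (simpl; lra).
  apply exp_lt_inv. rewrite exp_ln by lra. lra.
Qed.

Theorem lemma8 (p eta c : R) :
  0 < p < 1 -> 0 < eta -> 0 < c ->
  eta >= 4 * exp p / p -> c <= p * eta ->
  - c * Upsilon (1 / c) + c * ln (f_fun p (2 - eta / c))
    < Rmax (eta * (1 - p) * ln (1 - p ^ 3)) (- (15 / 100) * p * eta) - 1.
Proof.
  intros [Hp0 Hp1] He Hc Heta Hcp.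
  set (lam := p * eta).
  assert (Hlam : 4 * exp p <= lam).
  { unfold lam. apply Rge_le in Heta.
    apply (Rmult_le_compat_l p) in Heta; [|lra].
    replace (p * (4 * exp p / p)) with (4 * exp p) in Heta by (field; lra). lra. }
  assert (Hexp1 : 1 + p <= exp p) by apply exp_ineq1_le.
  assert (Hce : c < eta).
  { assert (p * eta < 1 * eta) by (apply Rmult_lt_compat_r; lra). unfold lam in Hcp. lra. }
  assert (Hec : 0 < eta - c) by lra.
  assert (Ht : 1 < eta / c).
  { apply (Rmult_lt_reg_r c); [lra|]. replace (eta / c * c) with eta by (field; lra). lra. }
  set (lc := ln c). set (le := ln eta). set (lec := ln (eta - c)).
  set (lp := ln p). set (lq := ln (1 - p)).
  assert (Hlnf : c * ln (f_fun p (2 - eta / c)) =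
     eta * (le - lc) + c * lp + (eta - c) * lq - (eta - c) * (lec - lc)).
  { unfold f_fun.
    replace (2 - (2 - eta / c)) with (eta / c) by ring.
    replace (1 - (2 - eta / c)) with (eta / c - 1) by ring.
    replace (2 - eta / c - 1) with (1 - eta / c) by ring.
    rewrite (rpow_pos (eta / c)) by lra.
    rewrite (rpow_pos (1 - p)) by lra.
    rewrite (rpow_pos (eta / c - 1)) by lra.
    pose proof (Rpower_pos' (eta / c) (eta / c)) as P1.
    pose proof (Rpower_pos' (1 - p) (eta / c - 1)) as P2.
    pose proof (Rpower_pos' (eta / c - 1) (1 - eta / c)) as P3.
    rewrite ln_mult; [| apply Rmult_lt_0_compat; [apply Rmult_lt_0_compat|]; lra | exact P3].
    rewrite ln_mult; [| apply Rmult_lt_0_compat; lra | exact P2].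
    rewrite ln_mult; [| exact P1 | lra].
    rewrite !ln_Rpower.
    rewrite ln_div' by lra.
    replace (eta / c - 1) with ((eta - c) / c) by (field; lra).
    rewrite ln_div' by lra.
    fold lc le lec lp lq.
    field. lra. }
  rewrite Hlnf.
  assert (Hlam_lp : ln lam = lp + le) by (unfold lam, lp, le; apply ln_mult; lra).
  assert (HB : (eta - c) * (le + lq - lec) <= c - lam).
  { pose proof (lnle (eta * (1 - p) / (eta - c)) ltac:(apply Rdiv_lt_0_compat; [apply Rmult_lt_0_compat|]; lra)) as H.
    rewrite ln_div' in H; [|apply Rmult_lt_0_compat; lra|lra]. rewrite ln_mult in H by lra.
    fold le lq lec in H.
    apply (Rmult_le_compat_l (eta - c)) in H; [|lra].
    replace ((eta - c) * (eta * (1 - p) / (eta - c) - 1)) with (c - lam) in H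
      by (unfold lam; field; lra).
    lra. }
  assert (Hlam4 : 4 < lam).
  { assert (1 < exp p) by lra. lra. }
  destruct (Rle_dec 1 c) as [Hc1 | Hc1].
  -
    assert (HU : - c * Upsilon (1 / c) = -1 + c - c * lc).
    { unfold Upsilon. destruct (Rle_dec (1 / c) 1) as [_|Hn].
      - rewrite ln_div' by lra. rewrite ln_1. fold lc. field. lra.
      - exfalso. apply Hn. apply (Rmult_le_reg_r c); [lra|].
        replace (1 / c * c) with 1 by (field; lra). lra. }
    rewrite HU.
    set (s := sqrt lam).
    assert (Hs0 : 0 < s) by (apply sqrt_lt_R0; lra).
    assert (Hss : s * s = lam) by (apply sqrt_sqrt; lra).
    assert (Hls : 2 * ln s = lp + le).
    { rewrite <- Hlam_lp, <- Hss. rewrite ln_mult by lra. ring. }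
    assert (HA : c * (ln s - lc) <= s - c).
    { pose proof (lnle (s / c) ltac:(apply Rdiv_lt_0_compat; lra)) as H.
      rewrite ln_div' in H by lra. fold lc in H.
      apply (Rmult_le_compat_l c) in H; [|lra].
      replace (c * (s / c - 1)) with (s - c) in H by (field; lra). lra. }
    assert (Hbound : -1 + c - c * lc +
      (eta * (le - lc) + c * lp + (eta - c) * lq - (eta - c) * (lec - lc))
      <= -1 + 2 * s - lam).
    { assert (E : c * (2 * ln s) = c * (lp + le)) by (rewrite Hls; reflexivity).
      nra. }
    apply (Rle_lt_trans _ _ _ Hbound).
    destruct (Rle_dec p (35/100)) as [Hpl | Hpl].
    +
      apply (Rlt_le_trans _ (eta * (1 - p) * ln (1 - p ^ 3) - 1)).
      2:{ pose proof (Rmax_l (eta * (1 - p) * ln (1 - p ^ 3)) (- (15 / 100) * p * eta)). lra. }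
      assert (Hp3 : 0 < 1 - p ^ 3) by (simpl; nra).
      assert (Hln3 : - (p ^ 3 / (1 - p ^ 3)) <= ln (1 - p ^ 3)).
      { pose proof (lnle (/ (1 - p ^ 3)) ltac:(apply Rinv_0_lt_compat; lra)) as H.
        rewrite ln_Rinv in H by lra.
        replace (/ (1 - p ^ 3) - 1) with (p ^ 3 / (1 - p ^ 3)) in H by (field; lra).
        apply Rinv_0_lt_compat in Hp3. lra. }
      assert (Hm1 : - eta * p ^ 3 <= eta * (1 - p) * ln (1 - p ^ 3)).
      { assert (Hq : (1 - p) * (p ^ 3 / (1 - p ^ 3)) <= p ^ 3).
        { replace ((1 - p) * (p ^ 3 / (1 - p ^ 3))) with (p ^ 3 * ((1 - p) / (1 - p^3))) by (field; lra).
          assert ((1 - p) / (1 - p ^ 3) <= 1).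
          { apply (Rmult_le_reg_r (1 - p ^ 3)); [lra|].
            replace ((1 - p) / (1 - p ^ 3) * (1 - p ^ 3)) with (1 - p) by (field; lra).
            simpl; nra. }
          assert (0 < p ^ 3) by (apply pow_lt; lra). nra. }
        assert (0 < eta * (1 - p)) by nra.
        assert (eta * (1 - p) * (- (p ^ 3 / (1 - p ^ 3))) <= eta * (1 - p) * ln (1 - p ^ 3))
          by (apply Rmult_le_compat_l; lra).
        nra. }
      assert (Hkey : 2 * s < lam * (1 - p ^ 2)).
      { assert (Hpoly : 1 < (1 + p) * (1 - p ^ 2) ^ 2) by (simpl; nra).
        assert (Hq2 : 0 < (1 - p ^ 2)) by (simpl; nra).
        assert (H4 : 4 < lam * (1 - p ^ 2) ^ 2).
        { assert (4 * (1 + p) <= lam) by lra.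
          assert (0 < (1 - p ^ 2) ^ 2) by (apply pow_lt; lra). nra. }
        assert (Hsq : 2 < s * (1 - p ^ 2)).
        { rewrite <- Hss in H4. simpl in H4.
          assert (0 < s * (1 - p ^ 2)) by nra. nra. }
        rewrite <- Hss. nra. }
      assert (E3 : eta * p ^ 3 = lam * p ^ 2) by (unfold lam; simpl; ring).
      lra.
    +
      apply (Rlt_le_trans _ (- (15 / 100) * p * eta - 1)).
      2:{ pose proof (Rmax_r (eta * (1 - p) * ln (1 - p ^ 3)) (- (15 / 100) * p * eta)). lra. }
      assert (Hex : (1 + p / 3) ^ 3 <= exp p).
      { replace (exp p) with (exp (p/3) ^ 3).
        - apply pow_incr. split; [lra|]. apply exp_ineq1_le.
        - rewrite exp_npow. f_equal. simpl. field. }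
      assert (H5 : 5569 / 1000 < lam).
      { assert (5569/4000 < (1 + p / 3) ^ 3) by (simpl; nra). lra. }
      assert (H6 : 236/100 < s) by nra.
      assert (H7 : 2 * s < 85/100 * (s * s)) by nra.
      assert (E : lam = p * eta) by reflexivity. lra.
  -
    assert (HU : Upsilon (1 / c) = 0).
    { unfold Upsilon. destruct (Rle_dec (1 / c) 1) as [Hn|_]; [|reflexivity].
      exfalso. apply (Rmult_le_compat_r c) in Hn; [|lra].
      replace (1 / c * c) with 1 in Hn by (field; lra). lra. }
    rewrite HU.
    apply (Rlt_le_trans _ (- (15 / 100) * p * eta - 1)).
    2:{ pose proof (Rmax_r (eta * (1 - p) * ln (1 - p ^ 3)) (- (15 / 100) * p * eta)). lra. }
    assert (HA : - c * lc <= 1 - c).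
    { pose proof (lnle (/ c) ltac:(apply Rinv_0_lt_compat; lra)) as H. rewrite ln_Rinv in H by lra. fold lc in H.
      apply (Rmult_le_compat_l c) in H; [|lra].
      replace (c * (/ c - 1)) with (1 - c) in H by (field; lra). lra. }
    assert (Hlpos : 0 < ln lam) by (rewrite <- ln_1; apply ln_increasing; lra).
    assert (Hcl : c * ln lam <= ln lam) by nra.
    assert (Hl4 : ln lam <= lam / 4 - 1 + 2 * ln 2).
    { pose proof (lnle (lam / 4) ltac:(apply Rdiv_lt_0_compat; lra)) as H. rewrite ln_div' in H by lra.
      replace 4 with (2 * 2) in H by ring. rewrite ln_mult in H by lra. lra. }
    pose proof ln2_lt.
    rewrite Hlam_lp in Hcl, Hl4.
    unfold lam in *. nra.
Qed.
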